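(* Let $p$ be a prime, $n\ge1$, and let $V,W\subset\mathbb{F}_{p^n}$ be $\mathbb{F}_p$-subspaces with $\dim_{\mathbb{F}_p}V+\dim_{\mathbb{F}_p}W\le n$. Then there exists $z\in\mathbb{F}_{p^n}^\times$ such that $V\cap zW=\{0\}$, where $zW=\{zw: w\in W\}$. *)

(* Defs.v *)
From HB Require Import structures.
From mathcomp Require Import all_boot all_order all_algebra all_field.
Set Implicit Arguments. Unset Strict Implicit. Unset Printing Implicit Defensive.

(* Main.v *)
Require Import Defs.
From HB Require Import structures.
From mathcomp Require Import all_boot all_order all_algebra all_field.
From mathcomp Require Import zify.
Import GRing.Theory.
Local Open Scope ring_scope.

Lemma cardV0 (p : nat) (p_prime : prime p) (L : fieldExtType 'F_p) (V : {vspace L}) :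
  #|[set v : finvect_type L | (v \in V) && (v != 0)]| = (p ^ \dim V).-1.
Proof.
have := card_vspace (V : {vspace finvect_type L}).
rewrite card_Fp // => <-.
rewrite [in RHS](cardD1 0) mem0v add1n /=.
apply: eq_card => x; rewrite !inE andbC //.
Qed.

Theorem mainTheorem2 (p n : nat) (p_prime : prime p) (n_ge1 : (1 <= n)%N)
  (L : fieldExtType 'F_p) (dimL : \dim (fullv : {vspace L}) = n)
  (V W : {vspace L}) (hdim : (\dim V + \dim W <= n)%N) :
  exists z : L, z != 0 /\
    (forall v : L, v \in V -> (exists2 w : L, w \in W & v = z * w) -> v = 0).
Proof.
have [a0|aP] := posnP (\dim V).
  exists 1; split; first exact: oner_neq0.
  by move=> v; move/eqP: a0; rewrite dimv_eq0 => /eqP ->; rewrite memv0 => /eqP.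
have [b0|bP] := posnP (\dim W).
  exists 1; split; first exact: oner_neq0.
  move=> v _ [w]; move/eqP: b0; rewrite dimv_eq0 => /eqP ->; rewrite memv0 => /eqP -> ->.
  by rewrite mulr0.
pose T := finvect_type L.
pose V0 := [set v : T | (v \in V) && (v != 0)].
pose W0 := [set v : T | (v \in W) && (v != 0)].
pose bad := [set (x.1 / x.2 : T) | x in setX V0 W0].
pose good := [set z : T | z != 0] :\: bad.
have cT : #|T| = (p ^ n)%N.
  have <- : #|(fullv : {vspace T})| = #|T| by apply: eq_card => x; rewrite memvf.
  rewrite card_vspace card_Fp //.
  by rewrite dimL.
have cNZ : #|[set z : T | z != 0]| = (p ^ n).-1.
  rewrite -cT -(cardsC1 (0 : T)); by apply: eq_card => x; rewrite !inE.
have cbad : (#|bad| <= (p ^ \dim V).-1 * (p ^ \dim W).-1)%N.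
  apply: leq_trans (leq_imset_card _ _) _.
  by rewrite cardsX cardV0 // cardV0.
have p1 := prime_gt1 p_prime.
have pa : (2 <= p ^ \dim V)%N.
  apply: leq_trans p1 _; rewrite -{1}(expn1 p); exact: leq_pexp2l (prime_gt0 p_prime) aP.
have pb : (2 <= p ^ \dim W)%N.
  apply: leq_trans p1 _; rewrite -{1}(expn1 p); exact: leq_pexp2l (prime_gt0 p_prime) bP.
have pab : (p ^ \dim V * p ^ \dim W <= p ^ n)%N.
  rewrite -expnD; exact: leq_pexp2l (prime_gt0 p_prime) hdim.
have : (0 < #|good|)%N.
  rewrite cardsD cNZ.
  have := subset_leq_card (subsetIr [set z : T | z != 0] bad).
  move: cbad pa pb pab.
  move: (p ^ \dim V)%N (p ^ \dim W)%N (p ^ n)%N #|bad| #|_ :&: bad| => X Y N B I.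
  nia.
case/card_gt0P => z; rewrite !inE => /andP [zbad z0].
exists z; split => // v vV [w wW vE].
apply/eqP; apply: contraNT zbad => v0.
have w0 : w != 0 by apply: contraNneq v0 => w0; rewrite vE w0 mulr0.
apply/imsetP; exists ((v : T), (w : T)); first by rewrite !inE vV v0 wW w0.
by rewrite /= vE mulfK.
Qed.
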